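(* Let $f$ be a quadratic rational map. If there exists $k\in\mathbb{N}$ such that $\mathrm{Deck}(f^k)\cong V_4$ (the Klein four-group), then the minimal such $k$ is $k=2$.
   Context: $\mathrm{Deck}(F)=\{\tau \text{ Möbius} : F\circ\tau=F\}$; $f^k$ is the $k$-th iterate. *)

(* Defs.v *)
(* The complex plane is [R[i]] (mathcomp-real-closed) for an
   arbitrary [R : realType]; the Riemann sphere is [option R[i]], [None] = oo. *)
From HB Require Import structures.
From mathcomp Require Import all_boot all_order all_algebra.
From mathcomp Require Import complex.
From mathcomp Require Import reals.
Set Implicit Arguments. Unset Strict Implicit. Unset Printing Implicit Defensive.
Import Order.TTheory GRing.Theory Num.Theory.
Local Open Scope ring_scope.

Section Sphere.
Variable R : realType.
Notation C := (R[i]).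

Definition sphere := option C.

(* The map of the sphere z |-> p(z)/q(z) induced by a pair of polynomials
   (intended for coprime p q, not both zero).  At a pole (q(z)=0) the value
   is oo; at oo the value is oo if deg p > deg q, lead p / lead q if
   deg p = deg q, and 0 if deg p < deg q. *)
Definition rat_of (p q : {poly C}) (z : sphere) : sphere :=
  match z with
  | Some w => if q.[w] != 0 then Some (p.[w] / q.[w]) else None
  | None => if (size q < size p)%N then None
            else Some (p`_(size q).-1 / lead_coef q)
  end.

Definition quadratic_rational_map (f : sphere -> sphere) : Prop :=
  exists p q : {poly C},
    [/\ coprimep p q, maxn (size p) (size q) = 3%N & f = rat_of p q].

Definition mobius (t : sphere -> sphere) : Prop :=
  exists a b c d : C,
    a * d - b * c != 0 /\ t = rat_of (a *: 'X + b%:P) (c *: 'X + d%:P).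

Definition Deck (F : sphere -> sphere) : (sphere -> sphere) -> Prop :=
  fun t => mobius t /\ F \o t = F.

Definition deck_klein4 (F : sphere -> sphere) : Prop :=
  exists phi : ('Z_2 * 'Z_2)%type -> (sphere -> sphere),
    [/\ injective phi,
        (forall g, Deck F (phi g)),
        (forall t, Deck F t -> exists g, phi g = t)
      & (forall g h, phi (g + h) = phi g \o phi h)].

End Sphere.

(* Main.v *)
Require Import Defs.
From HB Require Import structures.
From mathcomp Require Import all_boot all_order all_algebra.
From mathcomp Require Import complex reals ring.
From Stdlib Require Import FunctionalExtensionality Classical.
Set Implicit Arguments. Unset Strict Implicit. Unset Printing Implicit Defensive.
Import GRing.Theory Num.Theory.
Local Open Scope ring_scope.

Section Basic.
Variable R : realType.
Local Notation C := (R[i]).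
Local Notation sph := (sphere R).

Definition cls (v : C * C) : sph := if v.2 != 0 then Some (v.1 / v.2) else None.
Definition vec (z : sph) : C * C := if z is Some w then (w, 1) else (1, 0).
Definition nz (v : C * C) := (v.1 != 0) || (v.2 != 0).
Definition det2 (u v : C * C) := u.1 * v.2 - u.2 * v.1.
Definition lin (a b c d : C) (v : C * C) := (a * v.1 + b * v.2, c * v.1 + d * v.2).
Definition mob a b c d (z : sph) := cls (lin a b c d (vec z)).

Lemma cls_vec z : cls (vec z) = z.
Proof. by case: z => [w|]; rewrite /cls /= ?oner_eq0 ?divr1 ?eqxx. Qed.

Lemma nz_vec z : nz (vec z).
Proof. by case: z => [w|]; rewrite /nz /= oner_eq0 ?orbT. Qed.

Lemma cls_eq u v : nz u -> nz v -> det2 u v = 0 -> cls u = cls v.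
Proof.
case: u v => [u1 u2] [v1 v2]; rewrite /nz /det2 /cls /= => hu hv /eqP; rewrite subr_eq0 => /eqP h.
case: (eqVneq u2 0) => [u20|u20]; case: (eqVneq v2 0) => [v20|v20] //.
- move: h; rewrite u20 mul0r => /eqP; rewrite mulf_eq0 (negbTE v20) orbF => /eqP u10.
  by move: hu; rewrite u20 u10 eqxx.
- move: h; rewrite v20 mulr0 => /esym/eqP; rewrite mulf_eq0 (negbTE u20) orFb => /eqP v10.
  by move: hv; rewrite v20 v10 eqxx.
- congr Some; apply/eqP; rewrite eqr_div //; apply/eqP; rewrite h; ring.
Qed.

Lemma det_cls u v : nz u -> nz v -> cls u = cls v -> det2 u v = 0.
Proof.
case: u v => [u1 u2] [v1 v2]; rewrite /nz /det2 /cls /= => hu hv.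
case: (eqVneq u2 0) => [u20|u20]; case: (eqVneq v2 0) => [v20|v20] //=.
- by rewrite u20 v20 => _; ring.
- case=> /eqP; rewrite eqr_div // => /eqP ->; ring.
Qed.

Lemma det_vec_cls v : nz v -> det2 (vec (cls v)) v = 0.
Proof.
case: v => [v1 v2]; rewrite /nz /cls /det2 /=; case: (eqVneq v2 0) => [->|v20] /= h.
  by ring.
by rewrite mul1r divfK // subrr.
Qed.

Lemma det2_lin a b c d u v :
  det2 (lin a b c d u) (lin a b c d v) = (a * d - b * c) * det2 u v.
Proof. rewrite /det2 /lin /=; ring. Qed.

Lemma lin_nz a b c d v : a * d - b * c != 0 -> nz v -> nz (lin a b c d v).
Proof.
case: v => [v1 v2]; rewrite /nz /lin /= => hdet; apply: contraLR.
rewrite negb_or !negbK => /andP [/eqP h1 /eqP h2].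
have e1 : (a * d - b * c) * v1 = d * (a * v1 + b * v2) - b * (c * v1 + d * v2) by ring.
have e2 : (a * d - b * c) * v2 = a * (c * v1 + d * v2) - c * (a * v1 + b * v2) by ring.
rewrite h1 h2 !mulr0 subrr in e1 e2.
move/eqP: e1; move/eqP: e2; rewrite !mulf_eq0 (negbTE hdet) /= => -> ->; by [].
Qed.

Lemma mob_cls a b c d v : a * d - b * c != 0 -> nz v ->
  mob a b c d (cls v) = cls (lin a b c d v).
Proof.
move=> hd hv; apply: cls_eq; try apply: lin_nz => //; first exact: nz_vec.
by rewrite det2_lin det_vec_cls // mulr0.
Qed.

Lemma size_linp (a b : C) : size (a *: 'X + b%:P) = if a != 0 then 2%N else (b != 0 : nat).
Proof.
rewrite -mul_polyC size_MXaddC polyC_eq0 size_polyC.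
by case: (a == 0); case: (b == 0).
Qed.

Lemma coef_linp (a b : C) i : (a *: 'X + b%:P)`_i = if i == 0%N then b else if i == 1%N then a else 0.
Proof.
rewrite coefD coefZ coefX coefC; case: i => [|[|i]] //=; rewrite ?mulr0 ?mulr1 ?add0r ?addr0 //.
Qed.

Lemma rat_of_mob a b c d : a * d - b * c != 0 ->
  rat_of (a *: 'X + b%:P) (c *: 'X + d%:P) = mob a b c d.
Proof.
move=> hd; apply: functional_extensionality => z; case: z => [w|].
  by rewrite /rat_of /mob /cls /lin /= !hornerE.
rewrite /rat_of /mob /cls /lin /= !mulr1 !mulr0 !addr0 lead_coefE !size_linp.
case: (eqVneq c 0) => [c0|c0].
  have a0 : a != 0 by apply: contraNneq hd => ->; rewrite c0 !mul0r mulr0 subrr.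
  by rewrite a0 c0 /=; case: (d != 0).
rewrite /= !coef_linp /=; by case: (a != 0); case: (b != 0).
Qed.

Lemma mobius_mob a b c d : a * d - b * c != 0 -> mobius (mob a b c d).
Proof. by move=> hd; exists a, b, c, d; split => //; rewrite rat_of_mob. Qed.

Lemma mobiusE t : mobius t -> exists a b c d, a * d - b * c != 0 /\ t = mob a b c d.
Proof. by case=> a [b [c [d [hd ->]]]]; exists a, b, c, d; rewrite rat_of_mob. Qed.

Lemma mob_id : mob 1 0 0 1 = id.
Proof.
apply: functional_extensionality => z; rewrite /mob /lin.
by rewrite !mul1r !mul0r addr0 add0r -surjective_pairing cls_vec.
Qed.

Lemma mobius_id : mobius (@id sph).
Proof. rewrite -mob_id; apply: mobius_mob; by rewrite mulr1 mulr0 subr0 oner_eq0. Qed.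

End Basic.

Section Quad.
Variable R : realType.
Local Notation C := (R[i]).
Local Notation sph := (sphere R).

Definition qf (r2 r1 r0 : C) (v : C * C) := r2 * v.1 ^+ 2 + r1 * v.1 * v.2 + r0 * v.2 ^+ 2.
Definition hF (p q : {poly C}) (v : C * C) := (qf p`_2 p`_1 p`_0 v, qf q`_2 q`_1 q`_0 v).

Lemma horner3 (r : {poly C}) w : (size r <= 3)%N -> r.[w] = qf r`_2 r`_1 r`_0 (w, 1).
Proof.
move=> h; rewrite (horner_coef_wide _ h) !big_ord_recr big_ord0 /= /qf /=; ring.
Qed.

Lemma qf_scale r2 r1 r0 v1 v2 : v2 != 0 -> qf r2 r1 r0 (v1, v2) = v2 ^+ 2 * qf r2 r1 r0 (v1 / v2, 1).
Proof. move=> h; rewrite /qf /=; field; exact: h. Qed.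

Variables (p q : {poly C}).
Hypothesis hs : maxn (size p) (size q) = 3%N.
Hypothesis hc : coprimep p q.

Lemma sp3 : (size p <= 3)%N. Proof. by rewrite -hs leq_maxl. Qed.
Lemma sq3 : (size q <= 3)%N. Proof. by rewrite -hs leq_maxr. Qed.

Lemma rat_of_quad : rat_of p q = fun z => cls (hF p q (vec z)).
Proof.
apply: functional_extensionality => z; case: z => [w|].
  by rewrite /rat_of /hF /cls /= -!horner3 ?sp3 ?sq3.
rewrite /rat_of /hF /cls /= /qf /=.
have q10 : forall r2 r1 r0 : C, r2 * 1^+2 + r1*1*0 + r0*0^+2 = r2 by move=> *; ring.
rewrite !q10; case: ltnP => h.
  have -> : q`_2 = 0 by apply: nth_default; move: hs; rewrite (maxn_idPl (ltnW h)) => hp; rewrite -ltnS -hp.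
  by rewrite eqxx.
have sq : size q = 3%N by move: hs; rewrite (maxn_idPr h).
have q0 : q != 0 by rewrite -size_poly_eq0 sq.
have : lead_coef q != 0 by rewrite lead_coef_eq0.
by rewrite lead_coefE sq /= => ->.
Qed.

Lemma hF_nz v : nz v -> nz (hF p q v).
Proof.
case: v => [v1 v2]; rewrite /nz /hF /=; case: (eqVneq v2 0) => [v20|v20] hv.
  rewrite v20 /qf /= !expr0n /= !mulr0 !addr0.
  move: hv; rewrite orbF => hv1.
  rewrite !mulf_eq0 (negbTE hv1) !orbF.
  have : (size p == 3%N) || (size q == 3%N).
    by move: hs; rewrite /maxn; case: ltnP => _ ->; rewrite eqxx ?orbT.
  case/orP => /eqP h.
    have : lead_coef p != 0 by rewrite lead_coef_eq0 -size_poly_eq0 h.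
    by rewrite lead_coefE h (_ : (3.-1 = 2)%N) // => ->.
  have : lead_coef q != 0 by rewrite lead_coef_eq0 -size_poly_eq0 h.
  by rewrite lead_coefE h (_ : (3.-1 = 2)%N) // => ->; rewrite orbT.
rewrite (qf_scale p`_2 _ _ v1 v20) (qf_scale q`_2 _ _ v1 v20) -!horner3; [|exact: sq3|exact: sp3].
rewrite !mulf_eq0 (negbTE v20) !orFb.
case: (eqVneq p.[v1 / v2] 0) => [hp|]; last by [].
by rewrite orFb; apply: (coprimep_root hc); rewrite /root hp.
Qed.

Lemma f_cls v : nz v -> rat_of p q (cls v) = cls (hF p q v).
Proof.
move=> hv; rewrite rat_of_quad; apply: cls_eq; try apply: hF_nz => //; first exact: nz_vec.
have I1 : forall u w, det2 (hF p q u) (hF p q w) =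
  det2 u w * ((p`_2 * q`_0 - p`_0 * q`_2) * u.1 * w.2 + (p`_1 * q`_0 - p`_0 * q`_1) * u.2 * w.2
             + (p`_2 * q`_1 - p`_1 * q`_2) * u.1 * w.1 + (p`_2 * q`_0 - p`_0 * q`_2) * u.2 * w.1).
  move=> [u1 u2] [w1 w2]; rewrite /det2 /hF /qf /=; ring.
by rewrite I1 det_vec_cls // mul0r.
Qed.

End Quad.

Section Vec.
Variable R : realType.
Local Notation C := (R[i]).
Definition sc (k : C) (v : C * C) := (k * v.1, k * v.2).
Lemma lin_sc a b c d k v : lin a b c d (sc k v) = sc k (lin a b c d v).
Proof. rewrite /lin /sc /=; congr pair; ring. Qed.
Lemma sc_sc k l v : sc k (sc l v) = sc (k * l) v.
Proof. rewrite /sc /=; congr pair; ring. Qed.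
Lemma qf_sc r2 r1 r0 k v : qf r2 r1 r0 (sc k v) = k ^+ 2 * qf r2 r1 r0 v.
Proof. rewrite /qf /sc /=; ring. Qed.
Lemma det2_sc k l u v : det2 (sc k u) (sc l v) = k * l * det2 u v.
Proof. rewrite /det2 /sc /=; ring. Qed.
Lemma nz_sc k v : k != 0 -> nz v -> nz (sc k v).
Proof. by move=> hk; rewrite /nz /sc /= !mulf_eq0 (negbTE hk). Qed.
Lemma cls_sc k v : k != 0 -> nz v -> cls (sc k v) = cls v.
Proof. move=> hk hv; apply: cls_eq => //; first exact: nz_sc. rewrite /det2 /sc /=; ring. Qed.
Lemma nz_t (t : C) : nz (t, 1).
Proof. by rewrite /nz /= oner_eq0 orbT. Qed.

Lemma quad3 (a b c t1 t2 t3 : C) : t1 != t2 -> t1 != t3 -> t2 != t3 ->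
  a * t1 ^+ 2 + b * t1 + c = 0 -> a * t2 ^+ 2 + b * t2 + c = 0 -> a * t3 ^+ 2 + b * t3 + c = 0 ->
  [/\ a = 0, b = 0 & c = 0].
Proof.
move=> h12 h13 h23 e1 e2 e3.
have k12 : (t1 - t2) * (a * (t1 + t2) + b) = 0.
  by rewrite -[RHS](subrr 0) -{1}e1 -e2; ring.
have k13 : (t1 - t3) * (a * (t1 + t3) + b) = 0.
  by rewrite -[RHS](subrr 0) -{1}e1 -e3; ring.
move/eqP: k12; rewrite mulf_eq0 subr_eq0 (negbTE h12) /= => /eqP k12.
move/eqP: k13; rewrite mulf_eq0 subr_eq0 (negbTE h13) /= => /eqP k13.
have : (t2 - t3) * a = 0 by rewrite -[RHS](subrr 0) -{1}k12 -k13; ring.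
move/eqP; rewrite mulf_eq0 subr_eq0 (negbTE h23) /= => /eqP a0.
move: k12; rewrite a0 mul0r add0r => b0.
by move: e1; rewrite a0 b0 !mul0r !add0r => c0.
Qed.

Lemma scal3 (z00 z01 z10 z11 t1 t2 t3 : C) : t1 != t2 -> t1 != t3 -> t2 != t3 ->
  det2 (lin z00 z01 z10 z11 (t1, 1)) (t1, 1) = 0 ->
  det2 (lin z00 z01 z10 z11 (t2, 1)) (t2, 1) = 0 ->
  det2 (lin z00 z01 z10 z11 (t3, 1)) (t3, 1) = 0 ->
  [/\ z10 = 0, z01 = 0 & z00 = z11].
Proof.
move=> h12 h13 h23.
have E t : det2 (lin z00 z01 z10 z11 (t, 1)) (t, 1) = (- z10) * t ^+ 2 + (z00 - z11) * t + z01.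
  by rewrite /det2 /lin /=; ring.
rewrite !E => e1 e2 e3; case: (quad3 h12 h13 h23 e1 e2 e3) => a0 b0 c0.
split => //; first by rewrite -[z10]opprK a0 oppr0.
by apply/eqP; rewrite -subr_eq0 b0.
Qed.

Lemma natr_neq (m n : nat) : (m < n)%N -> (m%:R : C) != n%:R.
Proof. by move=> h; rewrite eqr_nat neq_ltn h. Qed.

Lemma pig (b : nat -> bool) : exists n1 n2 n3, [/\ (n1 < n2)%N, (n2 < n3)%N, (n3 < 5)%N &
  (b n1 && b n2 && b n3) || (~~ b n1 && ~~ b n2 && ~~ b n3)].
Proof.
case E0 : (b 0%N); case E1 : (b 1%N); case E2 : (b 2%N); case E3 : (b 3%N); case E4 : (b 4%N);
first [ by exists 0%N, 1%N, 2%N; rewrite E0 E1 E2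
      | by exists 0%N, 1%N, 3%N; rewrite E0 E1 E3
      | by exists 0%N, 1%N, 4%N; rewrite E0 E1 E4
      | by exists 0%N, 2%N, 3%N; rewrite E0 E2 E3
      | by exists 0%N, 2%N, 4%N; rewrite E0 E2 E4
      | by exists 0%N, 3%N, 4%N; rewrite E0 E3 E4
      | by exists 1%N, 2%N, 3%N; rewrite E1 E2 E3
      | by exists 1%N, 2%N, 4%N; rewrite E1 E2 E4
      | by exists 1%N, 3%N, 4%N; rewrite E1 E3 E4
      | by exists 2%N, 3%N, 4%N; rewrite E2 E3 E4 ].
Qed.

Lemma QZ (r2 r1 r0 : C) : exists v, nz v /\ qf r2 r1 r0 v = 0.
Proof.
case: (eqVneq r2 0) => [->|r20].
  exists (1, 0); split; first by rewrite /nz /= oner_eq0.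
  rewrite /qf /=; ring.
set s := sqrtC (r1 ^+ 2 - 4 * r2 * r0).
have two : (2 : C) != 0 by rewrite pnatr_eq0.
have four : (4 : C) != 0 by rewrite pnatr_eq0.
exists ((s - r1) / (2 * r2), 1); split; first exact: nz_t.
have e : 4 * r2 * qf r2 r1 r0 ((s - r1) / (2 * r2), 1) = s ^+ 2 - (r1 ^+ 2 - 4 * r2 * r0).
  rewrite /qf /=; field; exact: r20.
move/eqP: e; rewrite sqrtCK subrr !mulf_eq0 (negbTE four) (negbTE r20) /=; by move/eqP.
Qed.

End Vec.

Section Alg.
Variable R : realType.
Local Notation C := (R[i]).
Local Notation sph := (sphere R).
Variables p2 p1 p0 q2 q1 q0 : C.
Definition FF (v : C * C) := (qf p2 p1 p0 v, qf q2 q1 q0 v).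
Hypothesis HN : forall v, nz v -> nz (FF v).
Definition AA := p2 * q1 - p1 * q2.
Definition BB := p2 * q0 - p0 * q2.
Definition CC := p1 * q0 - p0 * q1.
Definition dd := BB ^+ 2 - AA * CC.
Definition JJ := lin BB CC (- AA) (- BB).
Definition ff (z : sph) := cls (FF (vec z)).
Definition iota := mob BB CC (- AA) (- BB).

Lemma I1 u v : det2 (FF u) (FF v) = det2 u v * det2 (JJ u) v.
Proof. rewrite /det2 /FF /JJ /lin /qf /AA /BB /CC /=; ring. Qed.
Lemma JJJ v : JJ (JJ v) = sc dd v.
Proof. rewrite /JJ /lin /sc /dd /=; congr pair; ring. Qed.
Lemma FJ v : FF (JJ v) = sc dd (FF v).
Proof. rewrite /FF /JJ /lin /sc /qf /dd /AA /BB /CC /=; congr pair; ring. Qed.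
Lemma MJ v : qf AA (2 * BB) CC (JJ v) = - dd * qf AA (2 * BB) CC v.
Proof. rewrite /JJ /lin /qf /dd /=; ring. Qed.
Lemma PJ v : qf p2 p1 p0 (JJ v) = dd * qf p2 p1 p0 v.
Proof. by have := FJ v; rewrite /FF /sc /= => -[]. Qed.
Lemma QJ v : qf q2 q1 q0 (JJ v) = dd * qf q2 q1 q0 v.
Proof. by have := FJ v; rewrite /FF /sc /= => -[]. Qed.

Lemma ff_cls v : nz v -> ff (cls v) = cls (FF v).
Proof.
move=> hv; apply: cls_eq; try apply: HN => //; first exact: nz_vec.
by rewrite I1 det_vec_cls // mul0r.
Qed.

Lemma dd_nz : dd != 0.
Proof.
apply/negP => /eqP d0.
pose e : C * C := (1, 0).
pose w := if nz (JJ e) then JJ e else e.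
have nzw : nz w by rewrite /w; case: ifP => // _; rewrite /nz /= oner_eq0.
have Jw : forall v, det2 (JJ w) v = 0.
  move=> v; rewrite /w; case: ifP => h.
    by rewrite JJJ /sc d0 /det2 /=; ring.
  move/negbT: h; rewrite /nz negb_or; case: (JJ e) => [a b] /= /andP [/negPn/eqP -> /negPn/eqP ->].
  by rewrite /det2 /=; ring.
have H v : det2 (FF w) (FF v) = 0 by rewrite I1 Jw mulr0.
move: (HN nzw); rewrite /nz /FF /=.
case: (eqVneq (qf p2 p1 p0 w) 0) => [P0|P0] /= Q0.
  have [v [nzv Qv]] := QZ q2 q1 q0.
  have := H v; rewrite /det2 /FF /= P0 Qv mul0r sub0r => /eqP; rewrite oppr_eq0 mulf_eq0 (negbTE Q0) /= => /eqP Pv.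
  by move: (HN nzv); rewrite /nz /FF /= Pv Qv eqxx.
have [v [nzv Pv]] := QZ p2 p1 p0.
have := H v; rewrite /det2 /FF /= Pv mulr0 subr0 => /eqP; rewrite mulf_eq0 (negbTE P0) /= => /eqP Qv.
by move: (HN nzv); rewrite /nz /FF /= Pv Qv eqxx.
Qed.

Lemma detJ : BB * (- BB) - CC * (- AA) != 0.
Proof. have e : BB * (- BB) - CC * (- AA) = - dd by rewrite /dd; ring. rewrite e oppr_eq0; exact: dd_nz. Qed.

Lemma JJ_nz v : nz v -> nz (JJ v).
Proof. exact: lin_nz detJ. Qed.

Lemma fiber u v : nz u -> nz v -> det2 (FF u) (FF v) = 0 -> det2 u v = 0 \/ det2 (JJ u) v = 0.
Proof. by move=> _ _; rewrite I1 => /eqP; rewrite mulf_eq0 => /orP [] /eqP; [left|right]. Qed.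

Lemma iota_mob : mobius iota.
Proof. exact: mobius_mob detJ. Qed.

Lemma iota_cls v : nz v -> iota (cls v) = cls (JJ v).
Proof. exact: mob_cls detJ. Qed.

Lemma iota_deck : Deck ff iota.
Proof.
split; first exact: iota_mob.
apply: functional_extensionality => z /=.
rewrite -{1}(cls_vec z) iota_cls ?nz_vec // ff_cls ?JJ_nz ?nz_vec // FJ cls_sc //.
  exact: dd_nz.
exact/HN/nz_vec.
Qed.

Lemma ff_surj y : exists x, ff x = y.
Proof.
pose w := vec y.
have [v [nzv hv]] := QZ (w.2 * p2 - w.1 * q2) (w.2 * p1 - w.1 * q1) (w.2 * p0 - w.1 * q0).
exists (cls v); rewrite ff_cls // -[y]cls_vec; apply: cls_eq; [exact: HN|exact: nz_vec|].
rewrite -[RHS]hv /det2 /FF /qf /w /=; ring.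
Qed.

Lemma iota_ne : iota <> id.
Proof.
move=> E.
have h n : det2 (lin BB CC (- AA) (- BB) (n%:R, 1)) (n%:R, 1) = 0.
  apply: det_cls; [exact/JJ_nz/nz_t|exact: nz_t|].
  by rewrite -iota_cls ?nz_t // E.
have [a0 c0 b0] := scal3 (natr_neq R (ltnSn 0)) (natr_neq R (ltnW (ltnSn 1))) (natr_neq R (ltnSn 1)) (h 0%N) (h 1%N) (h 2%N).
have := dd_nz; rewrite /dd c0 mulr0 subr0.
have -> : BB = 0.
  have two : (2 : C) != 0 by rewrite pnatr_eq0.
  have h2 : 2 * BB = 0 by rewrite mulr_natl mulr2n {2}b0 subrr.
  by move/eqP: h2; rewrite mulf_eq0 (negbTE two) => /eqP.
by rewrite expr0n eqxx.
Qed.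


Lemma sc_inj (k l : C) (v : C * C) : nz v -> sc k v = sc l v -> k = l.
Proof.
case: v => [v1 v2]; rewrite /nz /sc /= => /orP [] h [e1 e2]; apply: (mulIf h); by [].
Qed.

Lemma FF_sc (k : C) (v : C * C) : FF (sc k v) = sc (k ^+ 2) (FF v).
Proof. by rewrite /FF !qf_sc. Qed.

Lemma deck1 t : Deck ff t -> t = id \/ t = iota.
Proof.
case=> /mobiusE [a [b [c [d [hd ->]]]]] he.
pose e00 := BB * a + CC * c. pose e01 := BB * b + CC * d.
pose e10 := - AA * a - BB * c. pose e11 := - AA * b - BB * d.
have key n : det2 (lin a b c d (n%:R, 1)) (n%:R, 1) = 0 \/
             det2 (lin e00 e01 e10 e11 (n%:R, 1)) (n%:R, 1) = 0.
  pose u : C * C := (n%:R, 1).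
  have nzu : nz u := nz_t _.
  have nzT : nz (lin a b c d u) := lin_nz hd nzu.
  have h1 : ff (mob a b c d (cls u)) = ff (cls u) := congr1 (fun g => g (cls u)) he.
  rewrite mob_cls // !ff_cls // in h1.
  have := fiber nzT nzu (det_cls (HN nzT) (HN nzu) h1).
  have -> : JJ (lin a b c d u) = lin e00 e01 e10 e11 u.
    by rewrite /JJ /lin /e00 /e01 /e10 /e11 /=; congr pair; ring.
  by [].
have [n1 [n2 [n3 [h12 h23 h35 hb]]]] := pig (fun n => det2 (lin a b c d (n%:R, 1)) (n%:R, 1) == 0).
have d12 := natr_neq R h12; have d13 := natr_neq R (ltn_trans h12 h23); have d23 := natr_neq R h23.
case/orP: hb => /andP [/andP [b1 b2] b3].
  have [c0 b0 ad] := scal3 d12 d13 d23 (eqP b1) (eqP b2) (eqP b3).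
  left; apply: functional_extensionality => z; rewrite /mob -{2}(cls_vec z).
  apply: cls_eq; [exact/lin_nz/nz_vec|exact: nz_vec|].
  by rewrite c0 b0 ad /det2 /lin /=; ring.
have k n : ~~ (det2 (lin a b c d (n%:R, 1)) (n%:R, 1) == 0) ->
    det2 (lin e00 e01 e10 e11 (n%:R, 1)) (n%:R, 1) = 0.
  by move=> hn; case: (key n) => // h; move: hn; rewrite h eqxx.
have [f10 f01 f00] := scal3 d12 d13 d23 (k _ b1) (k _ b2) (k _ b3).
right; apply: functional_extensionality => z; rewrite /iota /mob.
apply: cls_eq; [exact/lin_nz/nz_vec|exact/lin_nz/nz_vec/detJ|].
have E : - dd * det2 (lin a b c d (vec z)) (lin BB CC (- AA) (- BB) (vec z)) =
  (e00 * (vec z).1 + e01 * (vec z).2) * (dd * (vec z).2) - (e10 * (vec z).1 + e11 * (vec z).2) * (dd * (vec z).1).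
  by rewrite /det2 /lin /e00 /e01 /e10 /e11 /dd /=; ring.
move: E; rewrite f10 f01 f00 => E.
have : - dd * det2 (lin a b c d (vec z)) (lin BB CC (- AA) (- BB) (vec z)) = 0 by rewrite E; ring.
by move/eqP; rewrite mulf_eq0 oppr_eq0 (negbTE dd_nz) /= => /eqP.
Qed.

Lemma par_scal (x00 x01 x10 x11 y00 y01 y10 y11 : C) : y00 * y11 - y01 * y10 != 0 ->
  (forall n, (n < 3)%N -> det2 (lin x00 x01 x10 x11 (n%:R, 1)) (lin y00 y01 y10 y11 (n%:R, 1)) = 0) ->
  exists l, forall v, lin x00 x01 x10 x11 v = sc l (lin y00 y01 y10 y11 v).
Proof.
move=> hy h.
pose z00 := y11 * x00 - y01 * x10. pose z01 := y11 * x01 - y01 * x11.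
pose z10 := - y10 * x00 + y00 * x10. pose z11 := - y10 * x01 + y00 * x11.
have E n : (n < 3)%N -> det2 (lin z00 z01 z10 z11 (n%:R, 1)) (n%:R, 1) = 0.
  move=> hn; rewrite -(h n hn) /det2 /lin /z00 /z01 /z10 /z11 /=; ring.
have [a0 b0 c0] := scal3 (natr_neq R (ltnSn 0)) (natr_neq R (ltnW (ltnSn 1))) (natr_neq R (ltnSn 1)) (E 0%N isT) (E 1%N isT) (E 2%N isT).
exists (z00 / (y00 * y11 - y01 * y10)) => -[v1 v2].
have I : lin y00 y01 y10 y11 (lin z00 z01 z10 z11 (v1, v2)) = sc (y00 * y11 - y01 * y10) (lin x00 x01 x10 x11 (v1, v2)).
  by rewrite /lin /sc /z00 /z01 /z10 /z11 /=; congr pair; ring.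
move: I; rewrite a0 b0 -c0 /lin /sc /= => -[I1 I2].
congr pair; apply: (mulfI hy); [rewrite -I1|rewrite -I2]; field; exact: hy.
Qed.


Definition det3 (a2 a1 a0 b2 b1 b0 c2 c1 c0 : C) :=
  a2 * (b1 * c0 - c1 * b0) - b2 * (a1 * c0 - c1 * a0) + c2 * (a1 * b0 - b1 * a0).

Lemma span (r2 r1 r0 : C) : (forall u, qf r2 r1 r0 (JJ u) = dd * qf r2 r1 r0 u) ->
  exists a b, forall u, qf r2 r1 r0 u = a * qf p2 p1 p0 u + b * qf q2 q1 q0 u.
Proof.
move=> hr.
pose D := det3 p2 p1 p0 q2 q1 q0 AA (2 * BB) CC.
pose al := det3 r2 r1 r0 q2 q1 q0 AA (2 * BB) CC.
pose be := det3 p2 p1 p0 r2 r1 r0 AA (2 * BB) CC.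
pose ga := det3 p2 p1 p0 q2 q1 q0 r2 r1 r0.
have cram u : D * qf r2 r1 r0 u = al * qf p2 p1 p0 u + be * qf q2 q1 q0 u + ga * qf AA (2 * BB) CC u.
  by rewrite /D /al /be /ga /det3 /qf; ring.
have DE : D = - 2 * dd by rewrite /D /det3 /dd /AA /BB /CC; ring.
have two : (2 : C) != 0 by rewrite pnatr_eq0.
have Dn : D != 0 by rewrite DE mulNr oppr_eq0 mulf_neq0 // dd_nz.
have hg u : 2 * dd * (ga * qf AA (2 * BB) CC u) = 0.
  have e1 := cram (JJ u); rewrite hr PJ QJ MJ in e1.
  have e2 := cram u.
  have -> : 2 * dd * (ga * qf AA (2 * BB) CC u) =
    dd * (al * qf p2 p1 p0 u + be * qf q2 q1 q0 u + ga * qf AA (2 * BB) CC u)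
    - (al * (dd * qf p2 p1 p0 u) + be * (dd * qf q2 q1 q0 u) + ga * (- dd * qf AA (2 * BB) CC u)) by ring.
  by rewrite -e1 -e2; ring.
have g0 : ga = 0.
  have hg' u : ga * qf AA (2 * BB) CC u = 0.
    by move/eqP: (hg u); rewrite mulf_eq0 mulf_eq0 (negbTE two) (negbTE dd_nz) /= => /eqP.
  apply/eqP; apply: contraT => gn.
  have m u : qf AA (2 * BB) CC u = 0 by move/eqP: (hg' u); rewrite mulf_eq0 (negbTE gn) /= => /eqP.
  have a0 : AA = 0 by have := m (1, 0); rewrite /qf /= => <-; ring.
  have c0 : CC = 0 by have := m (0, 1); rewrite /qf /= => <-; ring.
  have b0 : 2 * BB = 0 by have := m (1, 1); rewrite /qf /= a0 c0 => <-; ring.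
  move/eqP: b0; rewrite mulf_eq0 (negbTE two) /= => /eqP b0.
  by move: dd_nz; rewrite /dd a0 b0 mul0r expr0n subrr eqxx.
exists (al / D), (be / D) => u.
apply: (mulfI Dn); rewrite cram g0 mul0r addr0; field; exact: Dn.
Qed.

Lemma qf_lin (r2 r1 r0 a b c d : C) v : qf r2 r1 r0 (lin a b c d v) =
  qf (qf r2 r1 r0 (a, c)) (2 * r2 * a * b + r1 * (a * d + b * c) + 2 * r0 * c * d) (qf r2 r1 r0 (b, d)) v.
Proof. rewrite /qf /lin /=; ring. Qed.

Lemma fac s : mobius s -> s \o iota = iota \o s -> exists m, mobius m /\ ff \o s = m \o ff.
Proof.
move=> /mobiusE [s00 [s01 [s10 [s11 [hs ->]]]]] hc.
pose S := lin s00 s01 s10 s11.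
have nzS v : nz v -> nz (S v) by exact: lin_nz.
have step1 n : (n < 3)%N -> det2 (S (JJ (n%:R, 1))) (JJ (S (n%:R, 1))) = 0.
  move=> _; pose u : C * C := (n%:R, 1).
  have nzu : nz u := nz_t _.
  have h := congr1 (fun g => g (cls u)) hc; rewrite /= iota_cls // mob_cls ?JJ_nz //
    mob_cls // iota_cls ?nzS // in h.
  exact: det_cls (nzS _ (JJ_nz nzu)) (JJ_nz (nzS _ nzu)) h.
have detY : (BB * s00 + CC * s10) * (- AA * s01 - BB * s11) - (BB * s01 + CC * s11) * (- AA * s00 - BB * s10) != 0.
  have -> : (BB * s00 + CC * s10) * (- AA * s01 - BB * s11) - (BB * s01 + CC * s11) * (- AA * s00 - BB * s10)
    = (BB * (- BB) - CC * (- AA)) * (s00 * s11 - s01 * s10) by ring.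
  by rewrite mulf_neq0 // detJ.
have Hp : forall n, (n < 3)%N ->
    det2 (lin (s00 * BB + s01 * (- AA)) (s00 * CC + s01 * (- BB)) (s10 * BB + s11 * (- AA)) (s10 * CC + s11 * (- BB)) (n%:R, 1))
         (lin (BB * s00 + CC * s10) (BB * s01 + CC * s11) (- AA * s00 - BB * s10) (- AA * s01 - BB * s11) (n%:R, 1)) = 0.
  move=> n hn; rewrite -(step1 n hn) /S /JJ /lin /det2 /=; ring.
have [l hl] := par_scal detY Hp.
have hSJ v : S (JJ v) = sc l (JJ (S v)).
  have -> : S (JJ v) = lin (s00 * BB + s01 * (- AA)) (s00 * CC + s01 * (- BB))
     (s10 * BB + s11 * (- AA)) (s10 * CC + s11 * (- BB)) v.
    by rewrite /S /JJ /lin /=; congr pair; ring.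
  rewrite hl; congr sc; rewrite /S /JJ /lin /=; congr pair; ring.
pose e : C * C := (1, 0).
have nze : nz e by rewrite /nz /= oner_eq0.
have ll : l * (l * dd) = dd.
  have h := hSJ (JJ e).
  rewrite JJJ /S lin_sc -/S hSJ /JJ lin_sc -/JJ JJJ !sc_sc in h.
  by rewrite mulrA; apply/esym; apply: (sc_inj (nzS _ nze)).
have eig r2 r1 r0 : (forall v, qf r2 r1 r0 (JJ v) = dd * qf r2 r1 r0 v) ->
    forall u, qf r2 r1 r0 (S (JJ u)) = dd * qf r2 r1 r0 (S u).
  by move=> hr u; rewrite hSJ qf_sc hr mulrA expr2 -(mulrA l) ll.
have coef r2 r1 r0 : (forall v, qf r2 r1 r0 (JJ v) = dd * qf r2 r1 r0 v) ->
    exists a b, forall u, qf r2 r1 r0 (S u) = a * qf p2 p1 p0 u + b * qf q2 q1 q0 u.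
  move=> hr.
  have hr' : forall u, qf (qf r2 r1 r0 (s00, s10))
      (2 * r2 * s00 * s01 + r1 * (s00 * s11 + s01 * s10) + 2 * r0 * s10 * s11)
      (qf r2 r1 r0 (s01, s11)) (JJ u) = dd * qf (qf r2 r1 r0 (s00, s10))
      (2 * r2 * s00 * s01 + r1 * (s00 * s11 + s01 * s10) + 2 * r0 * s10 * s11)
      (qf r2 r1 r0 (s01, s11)) u.
    by move=> u; rewrite -!qf_lin; exact: (eig _ _ _ hr u).
  have [a [b hab]] := span hr'.
  by exists a, b => u; rewrite /S qf_lin hab.
have [aP [bP hP]] := coef _ _ _ PJ; have [aQ [bQ hQ]] := coef _ _ _ QJ.
have hK u : FF (S u) = lin aP bP aQ bQ (FF u) by rewrite /FF /lin /= hP hQ.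
have detK : aP * bQ - bP * aQ != 0.
  apply/negP => /eqP dK.
  pose adj w := lin s11 (- s01) (- s10) s00 w.
  have Sadj w : S (adj w) = sc (s00 * s11 - s01 * s10) w.
    by rewrite /S /adj /lin /sc /=; congr pair; ring.
  have h0 w : det2 (FF e) (FF w) = 0.
    have := det2_lin aP bP aQ bQ (FF (adj e)) (FF (adj w)); rewrite -!hK dK mul0r !Sadj !FF_sc det2_sc.
    by move/eqP; rewrite !mulf_eq0 (negbTE hs) /= => /eqP.
  have hB : BB = 0 by rewrite -(h0 (0, 1)) /det2 /FF /qf /BB /=; ring.
  have hA : AA + BB = 0 by rewrite -(h0 (1, 1)) /det2 /FF /qf /AA /BB /=; ring.
  move: hA; rewrite hB addr0 => hA.
  by move: dd_nz; rewrite /dd hA hB mul0r expr0n subrr eqxx.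
exists (mob aP bP aQ bQ); split; first exact: mobius_mob.
apply: functional_extensionality => z /=.
rewrite /mob -/S ff_cls ?nzS ?nz_vec // hK -[ff z]/(ff z) /ff -/(mob aP bP aQ bQ (cls (FF (vec z)))) mob_cls //.
exact/HN/nz_vec.
Qed.

End Alg.

Lemma z2 (x : 'Z_2) : x = 0 \/ x = 1.
Proof. case: x => [[|[|n]] Hn]; [left|right|]; try exact: val_inj. by []. Qed.
Lemma z22 (x : ('Z_2 * 'Z_2)%type) : [\/ x = (0,0), x = (1,0), x = (0,1) | x = (1,1)].
Proof. case: x => a b. case: (z2 a) => ->; case: (z2 b) => ->. 
 by apply: Or41. by apply: Or43. by apply: Or42. by apply: Or44. Qed.
Lemma v4b (s i m : ('Z_2 * 'Z_2)%type) :
  (i != 0) ==> (m != 0) ==> (m != i) ==> [|| s == 0, s == i, s == m | s == i + m].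
Proof. by case: (z22 s) => ->; case: (z22 i) => ->; case: (z22 m) => ->; vm_compute. Qed.
Lemma v4 : forall s i m : ('Z_2 * 'Z_2)%type, i != 0 -> m != 0 -> m != i ->
  [\/ s = 0, s = i, s = m | s = i + m].
Proof.
move=> s i m hi hm hmi; move: (v4b s i m); rewrite hi hm hmi /= => /or4P; case=> /eqP ->; by [apply: Or41 | apply: Or42 | apply: Or43 | apply: Or44].
Qed.
Lemma v3 : [/\ ((0,0) : 'Z_2 * 'Z_2) <> (1,0), ((0,0) : 'Z_2 * 'Z_2) <> (0,1) & ((1,0) : 'Z_2 * 'Z_2) <> (0,1)].
Proof. by split=> /eqP; vm_compute. Qed.

Section Group.
Variable R : realType.
Local Notation sph := (sphere R).
Variables (f iota : sph -> sph).
Hypothesis Hsurj : forall y, exists x, f x = y.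
Hypothesis Hidm : mobius (@id sph).
Hypothesis Hi : Deck f iota.
Hypothesis Hine : iota <> id.
Hypothesis Hdeck1 : forall t, Deck f t -> t = id \/ t = iota.
Hypothesis Hfac : forall s, mobius s -> s \o iota = iota \o s ->
  exists m, mobius m /\ f \o s = m \o f.

Lemma iter_surj k y : exists x, iter k f x = y.
Proof.
elim: k y => [|k IH] y; first by exists y.
have [x <-] := Hsurj y; have [z <-] := IH x; by exists z.
Qed.

Lemma surj_id (g m : sph -> sph) : (forall y, exists x, g x = y) -> m \o g = g -> m = id.
Proof.
move=> hs hm; apply: functional_extensionality => y.
have [x <-] := hs y; exact: (congr1 (fun h => h x) hm).
Qed.

Lemma deck_S j t : Deck (iter j f) t -> Deck (iter j.+1 f) t.
Proof.
case=> hm he; split => //; apply: functional_extensionality => x /=.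
by congr f; exact: (congr1 (fun h => h x) he).
Qed.

Lemma deck_le j k t : (j <= k)%N -> Deck (iter j f) t -> Deck (iter k f) t.
Proof.
move=> /subnK <-; elim: (k - j)%N => [|n IH] //= h.
by rewrite addSn; apply: deck_S; apply: IH.
Qed.

Lemma not1 : ~ deck_klein4 f.
Proof.
case=> phi [inj hD _ _].
have [a b c] := v3.
have h1 := Hdeck1 (hD (0,0)); have h2 := Hdeck1 (hD (1,0)); have h3 := Hdeck1 (hD (0,1)).
case: h1 => e1; case: h2 => e2; try (by apply: a; apply: inj; rewrite e1 e2);
case: h3 => e3; try (by apply: b; apply: inj; rewrite e1 e3);
by apply: c; apply: inj; rewrite e2 e3.
Qed.

Lemma main k : (0 < k)%N -> deck_klein4 (iter k f) -> deck_klein4 (iter 2 f).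
Proof.
move=> k0 D; have k2 : (2 <= k)%N.
  case: k k0 D => [|[|k]] // _ D; exfalso; exact: not1 D.
case: D => phi [inj hD hsur hom].
have idG : Deck (iter k f) id.
  by split => //; apply: functional_extensionality.
have [e he] := hsur _ idG.
have e0 : e = 0.
  apply: (addrI e); rewrite addr0; apply: inj; by rewrite hom he.
have iG : Deck (iter k f) iota by apply: (deck_le (j:=1)) => //; exact: ltnW.
have [i hi] := hsur _ iG.
have i0 : i != 0 by apply/eqP => ei; apply: Hine; rewrite -hi ei -e0.
have comm g h : phi g \o phi h = phi h \o phi g by rewrite -!hom addrC.
exists phi; split => //; last first.
  by move=> t ht; apply: hsur; apply: deck_le ht.
move=> s; have [sm se] := hD s; split => //.
have [mu [mum hmu]] : exists m, mobius m /\ f \o phi s = m \o f.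
  by apply: Hfac => //; rewrite -hi comm.
have ksub : (k = k.-1.+1) by rewrite prednK // ltnW.
have muD : Deck (iter k.-1 f) mu.
  split => //; apply: functional_extensionality => y.
  have [x <-] := Hsurj y.
  have := congr1 (fun h => h x) se; rewrite /= ksub !iterSr.
  by have := congr1 (fun h => h x) hmu => /= <-.
have muG : Deck (iter k f) mu by apply: deck_le muD; rewrite leq_pred.
case: (classic (f \o mu = f)) => [fmu|fmu].
  apply: functional_extensionality => x /=.
  by have := congr1 (fun h => h x) hmu => /= ->; have := congr1 (fun h => h (f x)) fmu.
exfalso.
have [m hm] := hsur _ muG.
have mue : mu <> id by move=> E; apply: fmu; rewrite E.
have mui : mu <> iota by move=> E; apply: fmu; rewrite E; case: Hi.
have m0 : m != 0 by apply/eqP => E; apply: mue; rewrite -hm E -e0.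
have mi : m != i by apply/eqP => E; apply: mui; rewrite -hm E.
have fcomm : f \o mu = mu \o f.
  case: (v4 s i0 m0 mi) => E.
  - exfalso; apply: mue; apply: (surj_id Hsurj); by rewrite -hmu E -e0 he.
  - exfalso; apply: mue; apply: (surj_id Hsurj); rewrite -hmu E hi; by case: Hi.
  - by rewrite -hmu -hm -E.
  - rewrite -hmu E hom hi hm; case: Hi => _ Hf.
    by apply: functional_extensionality => x /=; have := congr1 (fun h => h (mu x)) Hf.
apply: mue; apply: (surj_id (iter_surj k)).
have itc n : iter n f \o mu = mu \o iter n f.
  elim: n => [|n IH]; first by [].
  apply: functional_extensionality => x /=; simpl.
  have := congr1 (fun h => h x) IH => /= ->.
  exact: (congr1 (fun h => h (iter n f x)) fcomm).
by rewrite -itc; case: muG.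
Qed.

End Group.


Theorem mainTheorem11 (R : realType) (f : sphere R -> sphere R) :
  quadratic_rational_map f ->
  (exists k : nat, (0 < k)%N /\ deck_klein4 (iter k f)) ->
  deck_klein4 (iter 2 f) /\
  (forall k : nat, (0 < k)%N -> deck_klein4 (iter k f) -> (2 <= k)%N).
Proof.
case=> p [q [hc hs ->]] [k [k0 Dk]].
have HN := hF_nz hs hc.
have E : rat_of p q = ff p`_2 p`_1 p`_0 q`_2 q`_1 q`_0 by rewrite (rat_of_quad hs).
rewrite E in Dk *.
have Hs := ff_surj HN.
have Hd := iota_deck HN.
have Hn := iota_ne HN.
have H1 := deck1 HN.
have Hf := fac HN.
split.
  exact: (main Hs (mobius_id R) Hd Hn H1 Hf k0 Dk).
move=> n n0 Dn; case: n n0 Dn => [|[|n]] // _ Dn.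
exfalso; exact: (not1 H1 Dn).
Qed.
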